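(* Let $k$ be a field of characteristic zero, let $q\in k$ satisfy $q^m=1$ with $m$ the minimal positive such integer, and assume $k$ contains all $m$th roots of unity. Let $f\in k(x,y)$ and suppose $f=\tau_{x,q}(g)-g+c$ with $g\in k(x,y)$ and $c\in k(y)(x^m)$. Let $\partial_y\in\{\Delta_y,D_y\}$. Then $f$ is exact with respect to $(\Delta_{x,q},\partial_y)$ if and only if $c=\partial_y(d)$ for some $d\in k(y)(x^m)$.
   Context: On $k(x,y)$: $\tau_{x,q}(f(x,y))=f(qx,y)$, $\sigma_y(f(x,y))=f(x,y+1)$, $\Delta_{x,q}=\tau_{x,q}-1$, $\Delta_y=\sigma_y-1$, and $D_y=\partial/\partial y$. A rational function $f\in k(x,y)$ is exact with respect to a pair $(\partial_x,\partial_y)$ of such operators if $f=\partial_x(g)+\partial_y(h)$ for some $g,h\in k(x,y)$. Here $k(y)(x^m)$ denotes the subfield of $k(x,y)$ generated over $k(y)$ by $x^m$. *)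

(* Defs.v *)
From HB Require Import structures.
From mathcomp Require Import all_boot all_order all_algebra generic_quotient fraction.
Set Implicit Arguments. Unset Strict Implicit. Unset Printing Implicit Defensive.
Import Order.TTheory GRing.Theory Num.Theory.
Local Open Scope ring_scope.

Notation "x %:F" := (@FracField.tofrac _ x).

(* k[x,y] is represented as {poly {poly k}} = (k[y])[x]:                    *)
(*   the OUTER indeterminate 'X is x, the INNER one ('X%:P) is y.          *)

Definition ratfun (k : fieldType) := {fraction {poly {poly k}}}.

Lemma frac_repr (R : idomainType) (f : {fraction R}) :
  exists p : R * R, (p.2 != 0) && (f == p.1%:F / p.2%:F).
Proof.
elim/quotW: f => x.
exists (\n_x, \d_x); rewrite denom_ratioP /=.
apply/eqP.
have -> : (\n_x)%:F / (\d_x)%:F = (\pi_({fraction R}) (Ratio \n_x \d_x))%qT.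
  unlock FracField.tofrac.
  rewrite /GRing.inv /= -FracField.pi_inv /GRing.mul /= -FracField.pi_mul.
  apply/eqmodP; rewrite /= FracField.equivfE /FracField.mulf /FracField.invf.
  by rewrite !numden_Ratio ?mulr1 ?mul1r ?oner_neq0 ?denom_ratioP // mulrC.
by rewrite Ratio_numden.
Qed.

Definition fnum (R : idomainType) (f : {fraction R}) : R := (xchoose (frac_repr f)).1.
Definition fden (R : idomainType) (f : {fraction R}) : R := (xchoose (frac_repr f)).2.

(* For phi an injective ring
   endomorphism this is the unique extension (independent of the choice). *)
Definition frac_lift (R : idomainType) (phi : R -> R) (f : {fraction R}) :
  {fraction R} := (phi (fnum f))%:F / (phi (fden f))%:F.

Definition tauP (k : fieldType) (q : k) (p : {poly {poly k}}) : {poly {poly k}} :=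
  p \Po (q%:P *: 'X).
Definition sigmaP (k : fieldType) (p : {poly {poly k}}) : {poly {poly k}} :=
  map_poly (fun c : {poly k} => c \Po ('X + 1)) p.
Definition DyP (k : fieldType) (p : {poly {poly k}}) : {poly {poly k}} :=
  map_poly (fun c : {poly k} => c^`()) p.

Definition tau_xq (k : fieldType) (q : k) (f : ratfun k) : ratfun k :=
  frac_lift (tauP q) f.
Definition sigma_y (k : fieldType) (f : ratfun k) : ratfun k :=
  frac_lift (@sigmaP k) f.
Definition Delta_xq (k : fieldType) (q : k) (f : ratfun k) : ratfun k :=
  tau_xq q f - f.
Definition Delta_y (k : fieldType) (f : ratfun k) : ratfun k :=
  sigma_y f - f.
Definition D_y (k : fieldType) (f : ratfun k) : ratfun k :=
  ((DyP (fnum f)) * fden f - fnum f * DyP (fden f))%:F / ((fden f) ^+ 2)%:F.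

Inductive yop := YShift | YDiff.
Definition partial_y (k : fieldType) (o : yop) : ratfun k -> ratfun k :=
  match o with YShift => @Delta_y k | YDiff => @D_y k end.

Definition exact (k : fieldType) (dx dy : ratfun k -> ratfun k) (f : ratfun k) :=
  exists g h : ratfun k, f = dx g + dy h.

(* The subfield k(y)(x^m) of k(x,y): quotients P(x^m,y)/Q(x^m,y) of
   polynomials in x^m with coefficients in k[y] (this is exactly the
   subfield generated over k(y) by x^m). *)
Definition in_kyxm (k : fieldType) (m : nat) (c : ratfun k) : Prop :=
  exists P Q : {poly {poly k}},
    Q != 0 /\ c = (P \Po 'X^m)%:F / (Q \Po 'X^m)%:F.

(* Main.v *)
Require Import Defs.
From HB Require Import structures.
From mathcomp Require Import all_boot all_order all_algebra generic_quotient fraction.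
From mathcomp Require Import ring.
Import GRing.Theory.
Local Open Scope ring_scope.

Section Poly.
Variable k : fieldType.
Notation PP := {poly {poly k}}.

Lemma coef_tauP (q : k) (p : PP) i : (tauP q p)`_i = (q%:P) ^+ i * p`_i.
Proof.
rewrite /tauP coef_comp_poly.
under eq_bigr do rewrite exprZn coefZ coefXn.
case: (ltnP i (size p)) => hi.
  rewrite (bigD1 (Ordinal hi)) //= eqxx mulr1 big1 ?addr0; first by rewrite mulrC.
  move=> j /eqP hj; rewrite eq_sym; case: eqP => [e|]; last by rewrite !mulr0.
  by exfalso; apply: hj; apply: val_inj.
rewrite big1 ?(nth_default _ hi) ?mulr0 //.
move=> j _; case: eqP => [e|]; last by rewrite !mulr0.
by move: (ltn_ord j); rewrite -e ltnNge hi.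
Qed.

Lemma tauP_rmorph (q : k) : @tauP k q = comp_poly (q%:P *: 'X).
Proof. by []. Qed.

Lemma tauPD (q : k) : {morph tauP q : a b / a + b}.
Proof. by move=> a b; rewrite tauP_rmorph rmorphD. Qed.
Lemma tauPM (q : k) : {morph tauP q : a b / a * b}.
Proof. by move=> a b; rewrite tauP_rmorph rmorphM. Qed.
Lemma tauPB (q : k) : {morph tauP q : a b / a - b}.
Proof. by move=> a b; rewrite tauP_rmorph rmorphB. Qed.
Lemma tauP1 (q : k) : tauP q 1 = 1.
Proof. by rewrite tauP_rmorph rmorph1. Qed.
Lemma tauPn (q : k) n : tauP q n%:R = n%:R.
Proof. by rewrite tauP_rmorph rmorph_nat. Qed.

Lemma tauP_iter (q : k) n p : iter n (tauP q) p = tauP (q ^+ n) p.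
Proof.
elim: n => [|n IH] /=.
  by apply/polyP=> i; rewrite coef_tauP expr0 polyC1 expr1n mul1r.
apply/polyP=> i; rewrite IH !coef_tauP mulrA -exprMn -polyCM -exprS.
by rewrite exprS.
Qed.

Lemma tauP_inj0 (q : k) p : q != 0 -> tauP q p = 0 -> p = 0.
Proof.
move=> q0 h; apply/polyP=> i; move/polyP: h => /(_ i).
rewrite coef_tauP coef0 => /eqP; rewrite mulf_eq0 expf_eq0 polyC_eq0 (negbTE q0) andbF /=.
by move/eqP.
Qed.

Lemma tauP_fix_Xm (q : k) m P : q ^+ m = 1 -> tauP q (P \Po 'X^m) = P \Po 'X^m.
Proof.
move=> hq; rewrite /tauP -comp_polyA comp_Xn_poly exprZn -polyC_exp hq polyC1 scale1r.
by [].
Qed.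

Lemma tauP_fix (q : k) m p : (0 < m)%N -> q ^+ m = 1 ->
  (forall n : nat, (0 < n < m)%N -> q ^+ n != 1) ->
  tauP q p = p -> exists P : PP, p = P \Po 'X^m.
Proof.
move=> m0 hq hmin hp.
have z j : ~~ (m %| j)%N -> p`_j = 0.
  move=> nd; move/polyP: hp => /(_ j); rewrite coef_tauP => /eqP.
  rewrite -subr_eq0 -{2}(mul1r p`_j) -mulrBl mulf_eq0 => /orP [|/eqP //].
  rewrite subr_eq0 -polyC_exp -polyC1 (inj_eq polyC_inj).
  rewrite (divn_eq j m) exprD mulnC exprM hq expr1n mul1r => /eqP e.
  have : (0 < j %% m < m)%N by rewrite ltn_pmod // lt0n -/(dvdn m j) nd.
  by move/hmin; rewrite e eqxx.
exists (\poly_(i < size p) p`_(i * m)).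
apply/polyP=> j; rewrite coef_comp_poly_Xn //.
case: ifP => hd; last by rewrite z ?hd.
rewrite coef_poly divnK //; case: ltnP => // hs.
rewrite nth_default //; apply: leq_trans hs _.
by rewrite -{2}(divnK hd) leq_pmulr.
Qed.

Lemma sigmaP_rmorph : @sigmaP k = map_poly (comp_poly ('X + 1)).
Proof. by []. Qed.
Lemma sigmaPD : {morph @sigmaP k : a b / a + b}.
Proof. by move=> a b; rewrite sigmaP_rmorph rmorphD. Qed.
Lemma sigmaPM : {morph @sigmaP k : a b / a * b}.
Proof. by move=> a b; rewrite sigmaP_rmorph rmorphM. Qed.
Lemma sigmaPn n : @sigmaP k n%:R = n%:R.
Proof. by rewrite sigmaP_rmorph rmorph_nat. Qed.
Lemma coef_sigmaP p i : (@sigmaP k p)`_i = p`_i \Po ('X + 1).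
Proof. by rewrite /sigmaP coef_map_id0 // comp_poly0. Qed.

Lemma sigmaP_inj0 p : @sigmaP k p = 0 -> p = 0.
Proof.
move=> h; apply/polyP=> i; move/polyP: h => /(_ i); rewrite coef_sigmaP coef0 => h.
have : (p`_i \Po ('X + 1)) \Po ('X - 1) = 0 by rewrite h comp_poly0.
rewrite -comp_polyA comp_polyD comp_polyX comp_polyC subrK comp_polyXr => ->.
by [].
Qed.

Lemma sigma_tauP q p : @sigmaP k (tauP q p) = tauP q (sigmaP p).
Proof.
apply/polyP=> i; rewrite coef_sigmaP !coef_tauP coef_sigmaP.
by rewrite comp_polyM -rmorphXn /= comp_polyC.
Qed.

Lemma coef_DyP p i : (@DyP k p)`_i = (p`_i)^`().
Proof. by rewrite /DyP coef_map_id0 // deriv0. Qed.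
Lemma DyPD : {morph @DyP k : a b / a + b}.
Proof. by move=> a b; apply/polyP=> i; rewrite coefD !coef_DyP coefD derivD. Qed.
Lemma DyPB : {morph @DyP k : a b / a - b}.
Proof. by move=> a b; apply/polyP=> i; rewrite coefB !coef_DyP coefB derivB. Qed.
Lemma DyPM a b : @DyP k (a * b) = DyP a * b + a * DyP b.
Proof.
apply/polyP=> i; rewrite coefD !coefM coef_DyP coefM linear_sum /= -big_split /=.
by apply: eq_bigr => j _; rewrite derivM !coef_DyP.
Qed.
Lemma DyPn n : @DyP k n%:R = 0.
Proof.
apply/polyP=> i; rewrite coef_DyP coef0 -polyC_natr coefC.
by case: eqP => _; rewrite ?deriv0 // -polyC_natr derivC.
Qed.
Lemma DyP_tauP q p : @DyP k (tauP q p) = tauP q (DyP p).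
Proof.
apply/polyP=> i; rewrite coef_DyP !coef_tauP coef_DyP.
by rewrite -polyC_exp derivM derivC mul0r add0r.
Qed.
End Poly.
Section Gen.
Variable F : fieldType.
Lemma G1 (a b c e : F) : b != 0 -> e != 0 -> a / b = c / e -> a * e = c * b.
Proof.
move=> hb he h.
have : a / b * (b * e) = c / e * (b * e) by rewrite h.
have -> : a / b * (b * e) = a * e by field; rewrite ?hb ?he ?hM.
have -> : c / e * (b * e) = c * b by field; rewrite ?hb ?he ?hM.
done.
Qed.
Lemma G2 (a b c e : F) : b != 0 -> e != 0 -> a * e = c * b -> a / b = c / e.
Proof.
move=> hb he h.
have -> : a / b = (a * e) / (b * e) by field; rewrite ?hb ?he ?hM.
by rewrite h; field; rewrite ?hb ?he.
Qed.
Lemma G3 (a b c e : F) : b != 0 -> e != 0 -> a / b + c / e = (a * e + c * b) / (b * e).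
Proof. by move=> hb he; field; rewrite ?hb ?he. Qed.
Lemma G4 (a b c e : F) : b != 0 -> e != 0 -> a / b * (c / e) = (a * c) / (b * e).
Proof. by move=> hb he; field; rewrite ?hb ?he. Qed.
Lemma G5 (a b M : F) : b != 0 -> M != 0 -> a / (b * M) = a / b / M.
Proof. by move=> hb hM; field; rewrite ?hb ?hM. Qed.
Lemma GDadd (A A' B B' C C' E E' : F) : B != 0 -> E != 0 ->
  ((A' * E + A * E' + (C' * B + C * B')) * (B * E) - (A * E + C * B) * (B' * E + B * E')) / ((B * E) ^+ 2)
  = (A' * B - A * B') / B ^+ 2 + (C' * E - C * E') / E ^+ 2.
Proof. by move=> hb he; field; rewrite ?hb ?he. Qed.
Lemma GDdiv (A A' B B' M : F) : B != 0 -> M != 0 ->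
  (A' * (B * M) - A * (B' * M)) / ((B * M) ^+ 2) = (A' * B - A * B') / B ^+ 2 / M.
Proof. by move=> hb hM; field; rewrite ?hb ?hM. Qed.
End Gen.

Section Lift.
Variable R : idomainType.
Notation FR := {fraction R}.

Lemma fracE (u : FR) : u = (fnum u)%:F / (fden u)%:F.
Proof. by have /andP [_ /eqP] := xchooseP (frac_repr u). Qed.
Lemma fden_neq0 (u : FR) : fden u != 0.
Proof. by have /andP [] := xchooseP (frac_repr u). Qed.
Lemma tofrac_neq0 (d : R) : d != 0 -> d%:F != 0 :> FR.
Proof. by rewrite tofrac_eq0. Qed.

Lemma frac_eq (n d n' d' : R) : d != 0 -> d' != 0 ->
  n%:F / d%:F = n'%:F / d'%:F :> FR -> n * d' = n' * d.
Proof.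
move=> hd hd' h; apply/eqP; rewrite -tofrac_eq !tofracM; apply/eqP.
by apply: G1 h; apply: tofrac_neq0.
Qed.
Lemma frac_eq' (n d n' d' : R) : d != 0 -> d' != 0 ->
  n * d' = n' * d -> n%:F / d%:F = n'%:F / d'%:F :> FR.
Proof.
move=> hd hd' h; apply: G2; rewrite ?tofrac_neq0 // -!tofracM.
by rewrite h.
Qed.

Variable phi : R -> R.
Hypothesis phiD : forall a b, phi (a + b) = phi a + phi b.
Hypothesis phiM : forall a b, phi (a * b) = phi a * phi b.
Hypothesis phi1 : phi 1 = 1.
Hypothesis phi_inj0 : forall a, phi a = 0 -> a = 0.

Lemma phi0 : phi 0 = 0.
Proof. have h := phiD 0 0; rewrite addr0 in h; by apply: (addrI (phi 0)); rewrite -h addr0. Qed.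
Lemma phiN a : phi (- a) = - phi a.
Proof. by apply: (addrI (phi a)); rewrite -phiD !subrr phi0. Qed.
Lemma phiB a b : phi (a - b) = phi a - phi b.
Proof. by rewrite phiD phiN. Qed.
Lemma phi_neq0 d : d != 0 -> phi d != 0.
Proof. by move=> hd; apply/eqP => /phi_inj0 /eqP; rewrite (negbTE hd). Qed.

Notation L := (frac_lift phi).

Lemma L_frac n d : d != 0 -> L (n%:F / d%:F) = (phi n)%:F / (phi d)%:F.
Proof using phiD phiM phi1 phi_inj0.
move=> hd; rewrite /frac_lift.
set u := n%:F / d%:F.
have e := fracE u.
have h := frac_eq _ _ _ _ (fden_neq0 u) hd (esym e).
move: h (fden_neq0 u); move: (fnum u) (fden u) => N D h hD.
apply: frac_eq'; [exact: phi_neq0 | exact: phi_neq0 |].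
by rewrite -!phiM h.
Qed.

Lemma L_tofrac a : L a%:F = (phi a)%:F.
Proof using phiD phiM phi1 phi_inj0.
have -> : a%:F = a%:F / 1%:F :> FR by rewrite tofrac1 divr1.
by rewrite L_frac ?oner_neq0 // phi1 tofrac1 divr1.
Qed.

Lemma L_add u v : L (u + v) = L u + L v.
Proof using phiD phiM phi1 phi_inj0.
rewrite (fracE u) (fracE v).
move: (fden_neq0 u) (fden_neq0 v).
move: (fnum u) (fden u) (fnum v) (fden v) => a b c e hb he.
have hbe : b * e != 0 by rewrite mulf_neq0.
have hb' := phi_neq0 _ hb; have he' := phi_neq0 _ he.
have G x y z w : y != 0 -> w != 0 -> x%:F / y%:F + z%:F / w%:F = (x * w + z * y)%:F / (y * w)%:F :> FR.
  move=> hy hw; rewrite (@G3 FR) ?tofrac_neq0 //.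
  by rewrite tofracD !tofracM.
rewrite (G _ _ _ _ hb he) (L_frac _ _ hbe) (L_frac _ _ hb) (L_frac _ _ he) (G _ _ _ _ hb' he').
by rewrite phiD !phiM.
Qed.

Lemma L0 : L 0 = 0.
Proof using phiD phiM phi1 phi_inj0. by rewrite -tofrac0 L_tofrac phi0 tofrac0. Qed.

Lemma L_opp u : L (- u) = - L u.
Proof using phiD phiM phi1 phi_inj0. by apply: (addrI (L u)); rewrite -L_add !subrr L0. Qed.

Lemma L_sub u v : L (u - v) = L u - L v.
Proof using phiD phiM phi1 phi_inj0. by rewrite L_add L_opp. Qed.

Lemma L_mul u v : L (u * v) = L u * L v.
Proof using phiD phiM phi1 phi_inj0.
rewrite (fracE u) (fracE v).
move: (fden_neq0 u) (fden_neq0 v).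
move: (fnum u) (fden u) (fnum v) (fden v) => a b c e hb he.
have hbe : b * e != 0 by rewrite mulf_neq0.
have hb' := phi_neq0 _ hb; have he' := phi_neq0 _ he.
have G x y z w : y != 0 -> w != 0 -> x%:F / y%:F * (z%:F / w%:F) = (x * z)%:F / (y * w)%:F :> FR.
  move=> hy hw; rewrite (@G4 FR) ?tofrac_neq0 //.
  by rewrite !tofracM.
rewrite (G _ _ _ _ hb he) (L_frac _ _ hbe) (L_frac _ _ hb) (L_frac _ _ he) (G _ _ _ _ hb' he').
by rewrite !phiM.
Qed.

Lemma L_divC u M : M != 0 -> phi M = M -> L (u / M%:F) = L u / M%:F.
Proof using phiD phiM phi1 phi_inj0.
move=> hM pM; rewrite (fracE u).
move: (fden_neq0 u); move: (fnum u) (fden u) => a b hb.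
have hbM : b * M != 0 by rewrite mulf_neq0.
have hb' := phi_neq0 _ hb.
have G x y : y != 0 -> x%:F / y%:F / M%:F = x%:F / (y * M)%:F :> FR.
  move=> hy; rewrite -(@G5 FR) ?tofrac_neq0 //.
  by rewrite tofracM.
rewrite (G _ _ hb) (L_frac _ _ hbM) (L_frac _ _ hb) (G _ _ hb').
by rewrite phiM pM.
Qed.

Lemma L_sum I (r : seq I) (P : pred I) (f : I -> FR) :
  L (\sum_(i <- r | P i) f i) = \sum_(i <- r | P i) L (f i).
Proof using phiD phiM phi1 phi_inj0. by apply: (big_morph L L_add L0). Qed.

End Lift.
Arguments fracE {R}. Arguments fden_neq0 {R}. Arguments tofrac_neq0 {R}.
Arguments frac_eq {R}. Arguments frac_eq' {R} [n d n' d'].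

Lemma tauP1id (k : fieldType) (p : {poly {poly k}}) : tauP 1 p = p.
Proof. by apply/polyP=> i; rewrite coef_tauP polyC1 expr1n mul1r. Qed.

Lemma rot_big (R : Type) (idx : R) (op : Monoid.com_law idx) (n : nat) (f : nat -> R) :
  f n = f 0%N -> \big[op/idx]_(i < n) f i.+1 = \big[op/idx]_(i < n) f i.
Proof.
case: n => [|n] h; first by rewrite !big_ord0.
by rewrite big_ord_recr big_ord_recl /= h Monoid.mulmC.
Qed.

Section Main.
Variable k : fieldType.
Variables (q : k) (m : nat).
Hypothesis hchar : [pchar k] =i pred0.
Hypothesis m0 : (0 < m)%N.
Hypothesis hq : q ^+ m = 1.
Hypothesis hmin : forall n : nat, (0 < n < m)%N -> q ^+ n != 1.
Notation PP := {poly {poly k}}.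
Notation RF := (ratfun k).
Notation T := (tau_xq q).

Lemma q0 : q != 0.
Proof.
apply/eqP => e; move: hq; rewrite e expr0n (gtn_eqF m0) => /eqP.
by rewrite eq_sym oner_eq0.
Qed.

Lemma tauP_inj0' a : tauP q a = 0 -> a = 0.
Proof. exact: (@tauP_inj0 k q a q0). Qed.

Lemma T_frac n d : d != 0 -> T (n%:F / d%:F) = (tauP q n)%:F / (tauP q d)%:F.
Proof. exact: (@L_frac _ _ (@tauPD k q) (@tauPM k q) (@tauP1 k q) tauP_inj0'). Qed.
Lemma T_add u v : T (u + v) = T u + T v.
Proof. exact: (@L_add _ _ (@tauPD k q) (@tauPM k q) (@tauP1 k q) tauP_inj0'). Qed.
Lemma T_sub u v : T (u - v) = T u - T v.
Proof. exact: (@L_sub _ _ (@tauPD k q) (@tauPM k q) (@tauP1 k q) tauP_inj0'). Qed.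
Lemma T0 : T 0 = 0.
Proof. exact: (@L0 _ _ (@tauPD k q) (@tauPM k q) (@tauP1 k q) tauP_inj0'). Qed.
Lemma T_sum I (r : seq I) (P : pred I) (f : I -> RF) :
  T (\sum_(i <- r | P i) f i) = \sum_(i <- r | P i) T (f i).
Proof. exact: (@L_sum _ _ (@tauPD k q) (@tauPM k q) (@tauP1 k q) tauP_inj0'). Qed.

Definition M : PP := m%:R.
Lemma M_neq0 : M != 0.
Proof.
rewrite /M -!polyC_natr !polyC_eq0.
by have /pcharf0P -> := hchar; rewrite -lt0n.
Qed.
Lemma MF : (m%:R : RF) = M%:F.
Proof. by rewrite /M tofracMn tofrac1. Qed.

Lemma T_divM u : T (u / M%:F) = T u / M%:F.
Proof. exact: (@L_divC _ _ (@tauPD k q) (@tauPM k q) (@tauP1 k q) tauP_inj0' u M M_neq0 (@tauPn k q m)). Qed.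

Lemma iter_tauP_neq0 i b : b != 0 -> iter i (tauP q) b != 0.
Proof.
move=> hb; rewrite tauP_iter; apply/eqP => /(@tauP_inj0 k _ _ (expf_neq0 i q0)) /eqP.
by rewrite (negbTE hb).
Qed.

Lemma iterT_frac i a b : b != 0 ->
  iter i T (a%:F / b%:F) = (iter i (tauP q) a)%:F / (iter i (tauP q) b)%:F.
Proof.
move=> hb; elim: i => [|i IH]; first by [].
by rewrite [LHS]/= IH (T_frac _ _ (iter_tauP_neq0 _ _ hb)).
Qed.

Lemma iterT_m u : iter m T u = u.
Proof.
have e := fracE u; move: (fden_neq0 u) e; move: (fnum u) (fden u) => a b hb ->.
by rewrite (iterT_frac _ _ _ hb) !tauP_iter hq !tauP1id.
Qed.

Lemma iterT_add i u v : iter i T (u + v) = iter i T u + iter i T v.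
Proof. by elim: i => [|i IH]; [|rewrite [LHS]/= IH T_add]. Qed.
Lemma iterT_sub i u v : iter i T (u - v) = iter i T u - iter i T v.
Proof. by elim: i => [|i IH]; [|rewrite [LHS]/= IH T_sub]. Qed.

Definition pi (u : RF) : RF := (\sum_(i < m) iter i T u) / M%:F.

Lemma pi_fix u : T (pi u) = pi u.
Proof.
rewrite /pi T_divM T_sum; congr (_ / _).
have := @rot_big RF 0 +%R m (fun i => iter i T u) (iterT_m u).
by move=> <-.
Qed.

Lemma pi_add u v : pi (u + v) = pi u + pi v.
Proof. by rewrite /pi -mulrDl -big_split /=; congr (_ / _); apply: eq_bigr => i _; rewrite iterT_add. Qed.
Lemma pi_sub u v : pi (u - v) = pi u - pi v.
Proof. by rewrite /pi -mulrBl -sumrB /=; congr (_ / _); apply: eq_bigr => i _; rewrite iterT_sub. Qed.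

Lemma pi_Delta v : pi (T v - v) = 0.
Proof.
rewrite pi_sub /pi -mulrBl.
have -> : \sum_(i < m) iter i T (T v) = \sum_(i < m) iter i.+1 T v.
  by apply: eq_bigr => i _; rewrite iterSr.
by rewrite (@rot_big RF 0 +%R m (fun i => iter i T v) (iterT_m v)) subrr mul0r.
Qed.

Lemma pi_c c : T c = c -> pi c = c.
Proof.
move=> hc; rewrite /pi.
have -> : \sum_(i < m) iter i T c = \sum_(i < m) c.
  apply: eq_bigr => i _; elim: (nat_of_ord i) => [|j IH]; first by [].
  by rewrite [LHS]/= IH hc.
rewrite sumr_const card_ord -mulr_natr MF mulfK //.
by rewrite tofrac_eq0 M_neq0.
Qed.

Lemma T_kyxm c : in_kyxm m c -> T c = c.
Proof.
case=> [P [Q [_ ->]]].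
case: (eqVneq (Q \Po 'X^m) 0) => [->|hQ].
  by rewrite tofrac0 invr0 mulr0 T0.
by rewrite T_frac // !tauP_fix_Xm.
Qed.

Lemma fix_kyxm u : T u = u -> in_kyxm m u.
Proof.
move=> hu.
have eu := fracE u; move: (fden_neq0 u) eu; move: (fnum u) (fden u) => a b hb eu.
pose E := \prod_(i < m.-1) iter i.+1 (tauP q) b.
have hE : E != 0.
  by apply/prodf_neq0 => i _; apply: iter_tauP_neq0.
pose D := b * E.
have hD : D != 0 by rewrite mulf_neq0.
have eD : D = \prod_(i < m) iter i (tauP q) b.
  by rewrite /D /E; case: (m) m0 => // n _; rewrite big_ord_recl.
have tD : tauP q D = D.
  rewrite eD (big_morph (tauP q) (@tauPM k q) (@tauP1 k q)) /=.
  have := @rot_big PP 1 *%R m (fun i => iter i (tauP q) b).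
  rewrite tauP_iter hq tauP1id => /(_ erefl) <-.
  by apply: eq_bigr.
have eu' : u = (a * E)%:F / D%:F.
  rewrite eu; apply: frac_eq' => //; rewrite /D; ring.
have tN : tauP q (a * E) = a * E.
  move: hu; rewrite {1}eu' (T_frac _ _ hD) tD {1}eu'.
  move/(frac_eq _ _ _ _ hD hD) => /(mulIf hD).
  done.
have [P eP] := @tauP_fix k q m _ m0 hq hmin tN.
have [Q eQ] := @tauP_fix k q m _ m0 hq hmin tD.
exists P, Q; split; last by rewrite -eP -eQ.
by apply/eqP => Q0; move: hD; rewrite eQ Q0 comp_poly0 eqxx.
Qed.


Lemma sigmaP1 : @sigmaP k 1 = 1.
Proof. by rewrite sigmaP_rmorph rmorph1. Qed.
Notation S := (@sigma_y k).

Lemma S_frac n d : d != 0 -> S (n%:F / d%:F) = (sigmaP n)%:F / (sigmaP d)%:F.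
Proof. exact: (@L_frac _ _ (@sigmaPD k) (@sigmaPM k) sigmaP1 (@sigmaP_inj0 k)). Qed.
Lemma S_add (u v : RF) : S (u + v) = S u + S v.
Proof. exact: (@L_add _ _ (@sigmaPD k) (@sigmaPM k) sigmaP1 (@sigmaP_inj0 k)). Qed.
Lemma S_divM (u : RF) : S (u / M%:F) = S u / M%:F.
Proof. exact: (@L_divC _ _ (@sigmaPD k) (@sigmaPM k) sigmaP1 (@sigmaP_inj0 k) u M M_neq0 (@sigmaPn k m)). Qed.

Lemma tauP_neq0 b : b != 0 -> tauP q b != 0.
Proof. by move=> hb; apply/eqP => /tauP_inj0' /eqP; rewrite (negbTE hb). Qed.
Lemma sigmaP_neq0 b : b != 0 -> @sigmaP k b != 0.
Proof. by move=> hb; apply/eqP => /(@sigmaP_inj0 k) /eqP; rewrite (negbTE hb). Qed.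

Lemma S_T (u : RF) : S (T u) = T (S u).
Proof.
have e := fracE u; move: (fden_neq0 u) e; move: (fnum u) (fden u) => a b hb ->.
rewrite (T_frac _ _ hb) (S_frac _ _ (tauP_neq0 _ hb)) (S_frac _ _ hb) (T_frac _ _ (sigmaP_neq0 _ hb)).
by rewrite !sigma_tauP.
Qed.

Lemma D_y_frac (n d : PP) : d != 0 ->
  D_y (n%:F / d%:F) = (DyP n * d - n * DyP d)%:F / (d ^+ 2)%:F.
Proof.
move=> hd; rewrite /D_y. set u := n%:F / d%:F.
have h1 := frac_eq _ _ _ _ (fden_neq0 u) hd (esym (fracE u)).
move: h1 (fden_neq0 u); move: (fnum u) (fden u) => N D h1 hD.
have h2 : DyP N * d + N * DyP d = DyP n * D + n * DyP D by rewrite -!DyPM h1.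
apply: frac_eq'; [exact: expf_neq0 | exact: expf_neq0 |].
apply/eqP; rewrite -subr_eq0; apply/eqP.
transitivity (d * D * ((DyP N * d + N * DyP d) - (DyP n * D + n * DyP D))
   - (DyP D * d + DyP d * D) * (N * d - n * D)); first by ring.
by rewrite h1 h2 !subrr !mulr0 subrr.
Qed.

Lemma D_y_add (u v : RF) : D_y (u + v) = D_y u + D_y v.
Proof.
have e := fracE u; have e' := fracE v.
move: (fden_neq0 u) (fden_neq0 v) e e'.
move: (fnum u) (fden u) (fnum v) (fden v) => a b c e hb he -> ->.
have hbe : b * e != 0 by rewrite mulf_neq0.
have -> : a%:F / b%:F + c%:F / e%:F = (a * e + c * b)%:F / (b * e)%:F :> RF.
  by rewrite (@G3 RF) ?tofrac_neq0 // tofracD !tofracM.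
rewrite (D_y_frac _ _ hbe) (D_y_frac _ _ hb) (D_y_frac _ _ he).
rewrite DyPD !DyPM !(tofracB, tofracD, tofracM, tofracXn).
by apply: (@GDadd RF); apply: tofrac_neq0.
Qed.

Lemma D_y_T (u : RF) : D_y (T u) = T (D_y u).
Proof.
have e := fracE u; move: (fden_neq0 u) e; move: (fnum u) (fden u) => a b hb ->.
rewrite (T_frac _ _ hb) (D_y_frac _ _ (tauP_neq0 _ hb)) (D_y_frac _ _ hb).
rewrite (T_frac _ _ (expf_neq0 2 hb)).
by rewrite !expr2 tauPB !tauPM !DyP_tauP.
Qed.

Lemma D_y_divM (u : RF) : D_y (u / M%:F) = D_y u / M%:F.
Proof.
have e := fracE u; move: (fden_neq0 u) e; move: (fnum u) (fden u) => a b hb ->.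
have hbM : b * M != 0 by rewrite mulf_neq0 ?M_neq0.
have -> : a%:F / b%:F / M%:F = a%:F / (b * M)%:F :> RF.
  by rewrite -(@G5 RF) ?tofrac_neq0 ?M_neq0 // tofracM.
have DM : DyP M = 0 := DyPn k m.
rewrite (D_y_frac _ _ hbM) (D_y_frac _ _ hb) DyPM DM mulr0 addr0.
rewrite !(tofracB, tofracM, tofracXn).
by apply: (@GDdiv RF); apply: tofrac_neq0; rewrite ?M_neq0.
Qed.

Lemma dy_add o u v : @partial_y k o (u + v) = @partial_y k o u + @partial_y k o v.
Proof.
case: o => /=; last exact: D_y_add.
by rewrite /Delta_y S_add opprD addrACA.
Qed.
Lemma dy_T o u : @partial_y k o (T u) = T (@partial_y k o u).
Proof.
case: o => /=; last exact: D_y_T.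
by rewrite /Delta_y S_T T_sub.
Qed.
Lemma dy_divM o u : @partial_y k o (u / M%:F) = @partial_y k o u / M%:F.
Proof.
case: o => /=; last exact: D_y_divM.
by rewrite /Delta_y S_divM mulrBl.
Qed.
Lemma dy0 o : @partial_y k o 0 = 0.
Proof. by apply: (addrI (@partial_y k o 0)); rewrite -dy_add !addr0. Qed.
Lemma dy_sum o I (r : seq I) (P : pred I) (f : I -> RF) :
  @partial_y k o (\sum_(i <- r | P i) f i) = \sum_(i <- r | P i) @partial_y k o (f i).
Proof. exact: (big_morph _ (dy_add o) (dy0 o)). Qed.
Lemma dy_iter o i u : @partial_y k o (iter i T u) = iter i T (@partial_y k o u).
Proof. by elim: i => [|i IH]; [|rewrite [LHS]/= dy_T IH]. Qed.
Lemma pi_dy o h : pi (@partial_y k o h) = @partial_y k o (pi h).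
Proof.
rewrite /pi dy_divM dy_sum; congr (_ / _).
by apply: eq_bigr => i _; rewrite dy_iter.
Qed.

Lemma main_fwd o f g c : in_kyxm m c -> f = T g - g + c ->
  exact (Delta_xq q) (partial_y o) f ->
  exists d : ratfun k, in_kyxm m d /\ c = partial_y o d.
Proof.
move=> hc hf [G [H hGH]].
exists (pi H); split; first by apply: fix_kyxm; apply: pi_fix.
have Tc := T_kyxm _ hc.
have ec : c = f - (T g - g) by rewrite hf [T g - g + c]addrC addrK.
rewrite -(pi_c _ Tc) ec pi_sub pi_Delta subr0 hGH pi_add /Delta_xq pi_Delta add0r.
exact: pi_dy.
Qed.

End Main.

Theorem theorem1 (k : fieldType) (q : k) (m : nat) :
  [pchar k] =i pred0 ->
  (0 < m)%N -> q ^+ m = 1 ->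
  (forall n : nat, (0 < n < m)%N -> q ^+ n != 1) ->
  (exists rs : seq k, [/\ uniq rs, size rs = m & all (fun z => z ^+ m == 1) rs]) ->
  forall (o : yop) (f g c : ratfun k),
    in_kyxm m c ->
    f = tau_xq q g - g + c ->
    (exact (Delta_xq q) (partial_y o) f <->
     exists d : ratfun k, in_kyxm m d /\ c = partial_y o d).
Proof.
move=> hchar m0 hq hmin _ o f g c hc hf; split.
  exact: (@main_fwd k q m hchar m0 hq hmin o f g c hc hf).
case=> d [_ hd]; exists g, d.
by rewrite hf hd.
Qed.
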